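(* Let $G$ be a finite solvable group, $H$ a subgroup of $G$, and $i\geq 1$ an integer. Then there exist finitely many (possibly zero) subgroups $H_1,\dots,H_r$ of $G$ and one-dimensional characters $\chi_j$ of $H_j$ such that \[\mathrm{Ind}_H^G(1_H)=\mathrm{Ind}_{HG^i}^G(1_{HG^i})+\sum_{j=1}^r \mathrm{Ind}_{H_j}^G(\chi_j).\]
   Context: The derived series of $G$ is $G^0=G$, $G^1=[G,G]$, $G^{k}=[G^{k-1},G^{k-1}]$ for $k\ge1$, where $[X,X]$ is the subgroup generated by all commutators $xyx^{-1}y^{-1}$, $x,y\in X$. $1_H$ is the trivial character of $H$, $\mathrm{Ind}$ denotes induction of characters, and a one-dimensional character is a character of degree $1$. *)

(* Defs.v *)
From HB Require Import structures.
From mathcomp Require Import all_boot all_order all_algebra all_fingroup all_solvable all_field all_character.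
Set Implicit Arguments.
Unset Strict Implicit.
Unset Printing Implicit Defensive.

(* Main.v *)
Require Import Defs.
From HB Require Import structures.
From mathcomp Require Import all_boot all_order all_algebra all_fingroup all_solvable all_field all_character.
From mathcomp Require Import ring.
Import GRing.Theory Num.Theory.
Local Open Scope group_scope.
Local Open Scope ring_scope.
Set Implicit Arguments.
Unset Strict Implicit.
Unset Printing Implicit Defensive.

Section Key.
Variables (gT : finGroupType) (L A J : {group gT}).
Hypotheses (nAL : A <| L) (sJL : J \subset L) (sLJA : L \subset (J * A)%g)
  (sA'J : A^`(1)%g \subset J).

Let D := (J :&: A)%G.
Let sAL : A \subset L. Proof. exact: normal_sub nAL. Qed.
Let nAJ : J \subset 'N(A). Proof. exact: subset_trans sJL (normal_norm nAL). Qed.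
Let eqL : (A * J)%g = L.
Proof.
apply/eqP; rewrite eqEsubset mul_subG //=.
by rewrite -(normC nAJ).
Qed.
Let sDA : D \subset A. Proof. exact: subsetIr. Qed.
Let sDJ : D \subset J. Proof. exact: subsetIl. Qed.
Let sA'D : A^`(1)%g \subset D. Proof. by rewrite subsetI sA'J der_sub. Qed.
Let nDA : D <| A. Proof. exact: sub_der1_normal. Qed.
Let nDL : D <| L.
Proof.
rewrite /normal (subset_trans sDA sAL) -eqL mul_subG //.
  exact: normal_norm nDA.
by rewrite normsI ?normG.
Qed.

Definition S := [set t : Iirr A | D \subset cfker 'chi_t].
Definition pj x := odflt 1%g [pick j in J | (x * j^-1)%g \in A].
Definition ee (t : Iirr A) x := 'chi_t (x * (pj x)^-1)%g.
Definition ee2 t x := if t \in S then ee t x else 1.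

Lemma pjP x : x \in L -> pj x \in J /\ (x * (pj x)^-1)%g \in A.
Proof.
rewrite -eqL => /mulsgP[a j Aa Jj ->]; rewrite /pj.
case: pickP => [k /andP[]|] //=.
by move/(_ j) => /=; rewrite Jj -mulgA mulgV mulg1 Aa.
Qed.

Lemma linS t : t \in S -> 'chi_t \is a linear_char.
Proof.
by rewrite inE => sDk; rewrite lin_irr_der1 (subset_trans sA'D).
Qed.

Lemma eeE t x j : t \in S -> j \in J -> (x * j^-1)%g \in A ->
  ee t x = 'chi_t (x * j^-1)%g.
Proof.
move=> tS Jj Axj; rewrite /ee /pj; case: pickP => [k /andP[Jk Axk] | /(_ j)]; last first.
  by rewrite Jj Axj.
have -> : (x * k^-1 = (x * j^-1) * (j * k^-1))%g by rewrite !mulgA mulgKV.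
have Djk : (j * k^-1)%g \in D.
  rewrite inE groupM ?groupV //=.
  have -> : (j * k^-1 = (x * j^-1)^-1 * (x * k^-1))%g.
    by rewrite invMg invgK !mulgA mulgKV.
  by rewrite groupM ?groupV.
have kerD : (j * k^-1)%g \in cfker 'chi_t by rewrite inE in tS; exact: (subsetP tS).
by rewrite cfkerMr.
Qed.


Lemma ee_mul t : t \in S -> {in 'I_L['chi_t] &, forall x y,
  ee t (x * y)%g = ee t x * ee t y}.
Proof.
move=> tS x y /setIP[Lx Ix] /setIP[Ly Iy].
have [Jj Aa] := pjP Lx; have [Jk Ab] := pjP Ly.
set j := pj x in Jj Aa *; set k := pj y in Jk Ab *.
have Ij : j \in 'I['chi_t].
  have -> : j = ((x * j^-1)^-1 * x)%g by rewrite invMg invgK mulgKV.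
  by rewrite groupM ?groupV // (subsetP (sub_inertia _)).
have Abj : ((y * k^-1) ^ j^-1)%g \in A.
  by rewrite memJ_norm // (subsetP nAJ) ?groupV.
have Jjk : (j * k)%g \in J by rewrite groupM.
have E : (x * y * (j * k)^-1 = (x * j^-1) * (y * k^-1) ^ j^-1)%g.
  by rewrite invMg conjgE invgK !mulgA mulgKV.
rewrite (@eeE t _ _ tS Jjk); last by rewrite E groupM.
rewrite E.
rewrite (lin_charM (linS tS) Aa Abj).
have Ij' : (j^-1)%g \in 'I['chi_t] by rewrite groupV.
by rewrite (inertia_valJ _ Ij').
Qed.

Lemma ee1 t : t \in S -> ee t 1%g = 1.
Proof.
move=> tS; rewrite (@eeE t 1%g 1%g) ?group1 ?invg1 ?mulg1 ?group1 //.
by rewrite lin_char1 ?linS.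
Qed.

Fact ee2_repr t : mx_repr 'I_L['chi_t] (fun x => (ee2 t x)%:M : 'M[algC]_1).
Proof.
split; first by rewrite /ee2; case: ifP => // tS; rewrite ee1.
move=> x y Ix Iy /=; rewrite -scalar_mxM /ee2; case: ifP => tS; last by rewrite mulr1.
by rewrite ee_mul.
Qed.

Definition mrep t := MxRepresentation (ee2_repr t).
Definition mu t : 'CF('I_L['chi_t]) := cfRepr (mrep t).

Lemma mu_lin t : mu t \is a linear_char.
Proof. by apply/andP; split; [exact: cfRepr_char | rewrite cfRepr1]. Qed.

Lemma muE t x : mu t x = (x \in 'I_L['chi_t])%:R * ee2 t x.
Proof.
rewrite /mu cfunE /= mxtrace_scalar.
by case: (x \in _); rewrite ?mulr1n ?mulr0n ?mul1r ?mul0r.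
Qed.


Lemma sumS w : w \in A ->
  \sum_(t in S) 'chi_t w = #|A : D|%:R * (w \in D)%:R.
Proof.
move=> Aw.
have E : 'Ind[A, D] 1 = \sum_(t in S) 'chi_t.
  rewrite [LHS]cfun_sum_cfdot (bigID (mem S)) /= [X in _ + X]big1 ?addr0.
    apply: eq_bigr => t tS; rewrite -Frobenius_reciprocity.
    have tS' := tS; rewrite inE in tS'.
    by rewrite cfRes_sub_ker // lin_char1 ?linS // scale1r cfnorm1 scale1r.
  move=> t tS; rewrite -Frobenius_reciprocity.
  case: (eqVneq '[(1 : 'CF(D)), 'Res[D] 'chi_t] 0) => [-> | nz].
    by rewrite scale0r.
  have : 0 \in irr_constt ('Res[D] 'chi_t).
    by rewrite irr_consttE irr0 cfdotC conjC_eq0.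
  by move/(constt0_Res_cfker nDA) => sD; move: tS; rewrite inE sD.
rewrite -sum_cfunE -E cfInd_cfun1 // cfunE cfuniE //.
Qed.

Lemma crux z : z \in L ->
  \sum_(t in S) mu t z =
    (#|A|%:R^-1 * #|A : D|%:R) * \sum_(c in A) ((z ^ c)%g \in J)%:R.
Proof.
move=> Lz; have [Jj Ab] := pjP Lz.
set j := pj z in Jj Ab; set b := (z * j^-1)%g in Ab.
have Lj : j \in L by exact: (subsetP sJL).
have Nj : j \in 'N(A) by exact: (subsetP nAJ).
have Nj' : (j^-1)%g \in 'N(A) by rewrite groupV.
have zE : z = (b * j)%g by rewrite /b mulgKV.
have step1 t : t \in S -> mu t z =
    #|A|%:R^-1 * \sum_(c in A) 'chi_t (c^-1 * b * c ^ j^-1)%g.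
  move=> tS; rewrite muE /ee2 tS.
  have -> : (z \in 'I_L['chi_t]) = (j \in 'I_L['chi_t]).
    by rewrite zE groupMl // (subsetP (sub_Inertia _ sAL)).
  rewrite -(cfdot_irr_conjg _ nAL Lj) cfdotE -mulrA; congr (_ * _).
  rewrite mulr_suml (reindex_inj invg_inj) /=.
  apply: eq_big => [c | c Ac']; first by rewrite groupV.
  have Ac : c \in A by rewrite -groupV.
  have Acj : (c ^ j^-1)%g \in A by rewrite memJ_norm.
  have Ac'j : (c^-1 ^ j^-1)%g \in A by rewrite memJ_norm.
  rewrite cfConjgE // -(lin_charV_conj (linS tS) Ac'j) -conjVg invgK.
  have Acb : (c^-1 * b)%g \in A by rewrite groupM.
  rewrite (lin_charM (linS tS) Acb Acj).
  rewrite (lin_charM (linS tS) Ac' Ab) /ee /=.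
  by rewrite mulrAC.
rewrite (eq_bigr _ step1) -mulr_sumr exchange_big /= -mulrA; congr (_ * _).
rewrite mulr_sumr; apply: eq_bigr => c Ac.
have w_A : (c^-1 * b * c ^ j^-1)%g \in A.
  by rewrite (groupM (groupM (groupVr Ac) Ab)) // memJ_norm.
rewrite sumS //; congr (_ * _%:R).
have -> : (z ^ c = (c^-1 * b * c ^ j^-1) * j)%g.
  by rewrite zE !conjgE invgK !mulgA !mulgKV.
by rewrite (groupMr _ Jj) inE w_A andbT.
Qed.


Lemma S_conj t y : t \in S -> y \in L -> conjg_Iirr t y \in S.
Proof.
move=> tS Ly; have Ny : y \in 'N(A) by exact: (subsetP (normal_norm nAL)).
have NDy : y \in 'N(D) by exact: (subsetP (normal_norm nDL)).
rewrite inE conjg_IirrE cfker_conjg // -(normP NDy) conjSg.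
by rewrite inE in tS.
Qed.

Lemma mu_conjJ t y z : t \in S -> y \in J ->
  mu (conjg_Iirr t y) z = mu t (z ^ y^-1)%g.
Proof.
move=> tS Jy; have Ly : y \in L by exact: (subsetP sJL).
have Ny : y \in 'N(A) by exact: (subsetP nAJ).
have t'S := S_conj tS Ly.
rewrite !muE.
have memE : (z \in (L :&: 'I['chi_(conjg_Iirr t y)])%g) = ((z ^ y^-1)%g \in (L :&: 'I['chi_t])%g).
  by rewrite !in_setI conjg_IirrE -(conjg_inertia _ Ny) mem_conjg (groupJr _ (groupVr Ly)).
rewrite memE; case Iz: (_ \in (L :&: 'I['chi_t])%g); last by rewrite !mul0r.
rewrite !mul1r /ee2 tS t'S.
have Lz : z \in L by move: Iz; rewrite inE groupJr ?groupV // => /andP[].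
have [Jk Azk] := pjP Lz.
set k := pj z in Jk Azk.
have Jky : (k ^ y^-1)%g \in J by rewrite groupJr ?groupV.
rewrite (@eeE t _ (k ^ y^-1)%g tS Jky); last first.
  by rewrite -conjVg -conjMg memJ_norm ?groupV.
rewrite /ee -/k conjg_IirrE cfConjgE //.
by rewrite conjMg conjVg.
Qed.

Definition Gs t g := \sum_(x in L) mu t (g ^ x)%g.

Lemma Gs_conj t y g : t \in S -> y \in L -> Gs (conjg_Iirr t y) g = Gs t g.
Proof.
move=> tS; rewrite -eqL => /mulsgP[a k Aa Jk ->].
have La : a \in L by exact: (subsetP sAL).
have Lk : k \in L by exact: (subsetP sJL).
have -> : conjg_Iirr t (a * k)%g = conjg_Iirr t k.
  apply: irr_inj; rewrite !conjg_IirrE (cfConjgM _ nAL) //.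
  by rewrite (cfConjg_id _ Aa).
rewrite /Gs (eq_bigr (fun x => mu t (g ^ (x * k^-1))%g)); last first.
  by move=> x _; rewrite mu_conjJ // conjgM.
rewrite [RHS](reindex_inj (mulIg (k^-1)%g)) /=.
by apply: eq_bigl => x; rewrite groupMr ?groupV.
Qed.


Definition P := [set cfclass_Iirr L t | t in S].
Definition rep (O : {set Iirr A}) := odflt 0 [pick s in O].
Definition IndT t : 'CF(L) := 'Ind[L, 'I_L['chi_t]] (mu t).

Lemma IndTE t g : IndT t g = #|'I_L['chi_t]|%:R^-1 * Gs t g.
Proof. by rewrite /IndT cfIndE // Inertia_sub. Qed.

Lemma cfclass_self (t : Iirr A) : t \in cfclass_Iirr L t.
Proof. by rewrite -eq_cfclass_IirrE. Qed.

Lemma cfclass_S t s : t \in S -> s \in cfclass_Iirr L t -> s \in S.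
Proof. by move=> tS /imsetP[y Ly ->]; apply: S_conj. Qed.

Lemma orbit_sum O g : O \in P ->
  IndT (rep O) g = #|L|%:R^-1 * \sum_(s in S | cfclass_Iirr L s == O) Gs s g.
Proof.
case/imsetP=> t0 t0S ->.
have : rep (cfclass_Iirr L t0) \in cfclass_Iirr L t0.
  rewrite /rep; case: pickP => [r -> // | /(_ t0)].
  by rewrite cfclass_self.
set r := rep _ => rO.
have rS : r \in S by exact: cfclass_S rO.
have Er : cfclass_Iirr L r = cfclass_Iirr L t0 by apply/eqP; rewrite eq_cfclass_IirrE.
rewrite -Er.
rewrite (eq_bigl (mem (cfclass_Iirr L r))); last first.
  move=> s /=; rewrite eq_cfclass_IirrE; apply/andP/idP => [[] // | sO].
  by split => //; apply: cfclass_S sO.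
rewrite (eq_bigr (fun _ => Gs r g)); last first.
  by move=> s /imsetP[y Ly ->]; rewrite Gs_conj.
rewrite sumr_const card_cfclass_Iirr // IndTE.
rewrite -[Gs r g *+ _]mulr_natl mulrA; congr (_ * _).
rewrite -(Lagrange (Inertia_sub L 'chi_r)) natrM invfM -mulrA mulVf ?mulr1 //.
by rewrite pnatr_eq0 -lt0n indexg_gt0.
Qed.

Lemma card_rel : (#|A : D| * #|J|)%N = #|L|.
Proof.
have h1 := Lagrange sDA.
have h2 := mul_cardG A J.
rewrite eqL setIC -/D -h1 in h2.
apply/eqP; rewrite -(eqn_pmul2l (cardG_gt0 D)) mulnA h2 mulnC //.
Qed.

Lemma main_eq : 'Ind[L, J] 1 = \sum_(O in P) IndT (rep O).
Proof.
apply/cfun_inP => g Lg; rewrite sum_cfunE.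
rewrite (eq_bigr _ (fun O PO => orbit_sum g PO)) -mulr_sumr.
rewrite -(@partition_big_imset _ _ _ _ _ (cfclass_Iirr L) S).
rewrite /Gs exchange_big /=.
rewrite (eq_bigr _ (fun x Lx => crux (groupJ Lg Lx))) -mulr_sumr.
rewrite exchange_big /=.
rewrite (eq_bigr (fun c => \sum_(x in L) ((g ^ x)%g \in J)%:R)); last first.
  move=> c Ac; have Lc : c \in L by exact: (subsetP sAL).
  rewrite (reindex_inj (mulIg (c^-1)%g)) /=.
  apply: eq_big => [x | x _]; first by rewrite groupMr ?groupV.
  by rewrite -conjgM mulgKV.
rewrite sumr_const cfIndE // (eq_bigr (fun x => ((g ^ x)%g \in J)%:R)); last first.
  by move=> x _; rewrite cfun1E.
set S0 := \sum_(x in L) _.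
rewrite -[S0 *+ _]mulr_natl !mulrA; congr (_ * S0).
rewrite -card_rel natrM.
have nA : (#|A|%:R : algC) != 0 by exact: neq0CG.
have nJ : (#|J|%:R : algC) != 0 by exact: neq0CG.
have nAD : (#|A : D|%:R : algC) != 0 by rewrite pnatr_eq0 -lt0n indexg_gt0.
have eD : #|A : J :&: A| = #|A : D| by [].
rewrite eD. field. by rewrite nA nJ nAD.
Qed.


Lemma S0 : (0 : Iirr A) \in S.
Proof. by rewrite inE irr0 cfker_cfun1. Qed.

Lemma orbit0 : cfclass_Iirr L 0 = [set 0 : Iirr A].
Proof.
apply/setP => s; rewrite inE; apply/imsetP/eqP => [[y _ ->] | ->].
  exact: conjg_Iirr0.
by exists 1%g; rewrite ?group1 ?conjg_Iirr0.
Qed.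

Lemma IndT0 : IndT (rep [set 0]) = 1.
Proof.
have -> : rep [set 0] = 0.
  by rewrite /rep; case: pickP => [r /set1P -> // | /(_ 0)]; rewrite set11.
have IL : ('I_L['chi[A]_0] : {set gT}) = L.
  by apply/setIidPl; rewrite irr0 inertia1 normal_norm.
apply/cfun_inP => g Lg; rewrite IndTE cfun1E Lg.
rewrite /Gs (eq_bigr (fun _ => 1)); last first.
  move=> x Lx; have Lgx := groupJ Lg Lx.
  rewrite muE /ee2 S0 /ee irr0 cfun1E (pjP Lgx).2.
  by rewrite /= mulr1 in_setI Lgx /= inertia1 (subsetP (normal_norm nAL)).
have -> : \sum_(x in L) (1 : algC) = #|L|%:R by rewrite sumr_const.
by rewrite IL mulVf ?neq0CG.
Qed.

Lemma keyK_sec : 'Ind[L, J] 1 = 1 + \sum_(O in P :\ [set 0]) IndT (rep O).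
Proof.
have P0 : [set 0 : Iirr A] \in P by rewrite -orbit0; apply: imset_f; exact: S0.
rewrite main_eq (bigD1 [set 0]) //= IndT0; congr (_ + _).
by apply: eq_bigl => O; rewrite in_setD1 andbC.
Qed.

End Key.

Unset Implicit Arguments.
Local Open Scope ring_scope.
Local Open Scope group_scope.

Section Monsum.
Variable gT : finGroupType.
Definition msP (L : {set gT}) (p : {K : {group gT} & 'CF(K)}) :=
  (tag p \subset L) && (tagged p \is a linear_char).
Definition indsum (L : {group gT}) (s : seq {K : {group gT} & 'CF(K)}) : 'CF(L) :=
  \sum_(p <- s) 'Ind[L, tag p] (tagged p).

Lemma indsum_cat L s1 s2 : indsum L (s1 ++ s2) = indsum L s1 + indsum L s2.
Proof. by rewrite /indsum big_cat. Qed.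

Lemma indsum_Ind (G L : {group gT}) s : L \subset G -> all (msP L) s ->
  'Ind[G, L] (indsum L s) = indsum G s /\ all (msP G) s.
Proof.
move=> sLG /allP hs; split.
  rewrite /indsum linear_sum; apply: eq_big_seq => p /hs /andP[sKL _].
  exact: cfIndInd.
apply/allP => p /hs /andP[sKL lin]; rewrite /msP lin andbT.
exact: subset_trans sLG.
Qed.
End Monsum.
Arguments msP {gT}.
Arguments indsum {gT}.

Lemma keyK (gT : finGroupType) (L A J : {group gT}) :
  A <| L -> J \subset L -> L \subset J * A -> A^`(1) \subset J ->
  exists s, all (msP L) s /\ 'Ind[L, J] 1 = 1 + indsum L s.
Proof.
move=> nAL sJL sLJA sA'J.
set mu' := mu nAL sJL sLJA sA'J.
exists [seq @Tagged _ ('I_L['chi_(rep X)])%G (fun K : {group gT} => 'CF(K)) (mu' (rep X))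
         | X <- enum (P L A J :\ [set (0 : Iirr A)%R])].
split.
  apply/allP => p /mapP[X _ ->]; rewrite /msP /= mu_lin andbT.
  exact: Inertia_sub.
rewrite (keyK_sec nAL sJL sLJA sA'J); congr (_ + _).
by rewrite /indsum big_map big_enum.
Qed.

Lemma joinN (gT : finGroupType) (G H : {group gT}) n : H \subset G ->
  ((H * G^`(n))%G : {set gT}) = H * G^`(n).
Proof.
move=> sHG; rewrite /= norm_joinEl //.
exact: subset_trans sHG (normal_norm (der_normal n G)).
Qed.

Lemma telescope (gT : finGroupType) (G H : {group gT}) i m : H \subset G ->
  exists s, all (msP G) s /\
   'Ind[G, (H * G^`(i + m))%G] 1 = 'Ind[G, (H * G^`(i))%G] 1 + indsum G s.
Proof.
move=> sHG; elim: m => [|m [s [hs IH]]].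
  by exists [::]; rewrite addn0 /indsum big_nil addr0.
set L := (H * G^`(i + m))%G; set J := (H * G^`(i + m.+1))%G.
have sLG : L \subset G.
  by rewrite /L /= join_subG sHG der_sub.
have sAJ : G^`(i + m.+1) \subset J.
  exact: joing_subr.
have sJL : J \subset L.
  rewrite /J /L /= join_subG joing_subl /=.
  apply: (subset_trans _ (joing_subr _ _)); rewrite addnS; exact: der_subS.
have nAL : G^`(i + m) <| L.
  apply: normalS (der_normal _ _) => //; exact: joing_subr.
have sLJA : L \subset J * G^`(i + m).
  rewrite /L joinN // mulSg //; exact: joing_subl.
have sA'J : (G^`(i + m))^`(1) \subset J.
  by rewrite derg1 -dergSn -addnS.
have [s1 [hs1 E1]] := @keyK _ _ _ _ nAL sJL sLJA sA'J.
have [E2 hs2] := @indsum_Ind _ _ _ s1 sLG hs1.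
exists (s ++ s1); split; first by rewrite all_cat hs hs2.
rewrite -(cfIndInd _ sLG sJL) E1 linearD /= E2 IH indsum_cat addrA.
by [].
Qed.

Theorem corollary3p1p4 (gT : finGroupType) (G H : {group gT}) (i : nat) :
  solvable G -> H \subset G -> (1 <= i)%N ->
  exists (r : nat) (Hs : 'I_r -> {group gT}) (chi : forall j : 'I_r, 'CF(Hs j)),
    [/\ forall j, Hs j \subset G,
        forall j, chi j \is a linear_char
      & 'Ind[G, H] 1 =
          'Ind[G, (H * G^`(i))%G] 1 + \sum_(j < r) 'Ind[G, Hs j] (chi j)].
Proof.
move=> /derivedP[n Gn1] sHG _.
have [s [hs E]] := @telescope _ G H i n sHG.
have e1 : G^`(i + n) = 1.
  by elim: (i) => [|k IHk]; rewrite ?add0n // addSn dergSn IHk commG1.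
have eH : (H * G^`(i + n))%G = H.
  by apply: val_inj; rewrite /= e1 joingG1.
rewrite eH in E.
pose d : {K : {group gT} & 'CF(K)} := Tagged (fun K : {group gT} => 'CF(K)) (1%R : 'CF(1%G)).
exists (size s), (fun j => tag (nth d s j)), (fun j => tagged (nth d s j)).
split.
- by move=> j; have /andP[] := all_nthP d hs j (ltn_ord j).
- by move=> j; have /andP[] := all_nthP d hs j (ltn_ord j).
rewrite E /indsum (big_nth d) big_mkord.
by [].
Qed.
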